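(* Assume $E\setminus T\ne\emptyset$ and let $\epsilon>0$. Let $f\in\mathbb{R}^E$ be feasible with $\xi_r(f)\le(1+\epsilon)\,\xi_r(f^* )$, and let $v$ be its tree induced voltages. Then \[ \big\|v-L^\dagger\chi\big\|_L\le\sqrt{\epsilon\,\tau}\,\big\|L^\dagger\chi\big\|_L . \]
   Context: Let $G=(V,E,w)$ be a connected undirected graph with resistances $r_e=1/w_e>0$. Each edge has a fixed orientation $(a,b)$; for $f\in\mathbb{R}^E$ write $f(b,a):=-f(a,b)$. The incidence matrix $B\in\mathbb{R}^{E\times V}$ has $B_{(a,b),c}=1$ if $c=a$, $-1$ if $c=b$, $0$ otherwise; $R=\mathrm{diag}(r_e)_{e\in E}$; $L=B^TR^{-1}B$, $L^\dagger$ its Moore–Penrose pseudoinverse, and $\|x\|_L=\sqrt{x^TLx}$. The energy of $f$ is $\xi_r(f)=f^TRf$. Fix $\chi\in\mathbb{R}^V$ with $\sum_a\chi(a)=0$; $f$ is feasible if $B^Tf=\chi$; $f^*$ is the unique feasible $f$ minimizing $\xi_r(f)$. Let $T\subseteq E$ be a spanning tree. For vertices $a,b$, $\pi_{(a,b)}\in\mathbb{R}^E$ is the unit flow from $a$ to $b$ along the unique $a$–$b$ path in $T$. For $e=(a,b)\in E\setminus T$, $c_e=\mathbf{1}_e-\pi_{(a,b)}$ and $R_e=c_e^TRc_e$. The tree condition number is $\tau=\sum_{e\in E\setminus T}R_e/r_e$. Fix a root $s\in V$; the tree induced voltages of $f$ are $v(a)=\sum r_{e'}f(e')$, summing over the edges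 $e'$ of the tree path from $a$ to $s$, each traversed in the direction of the path (with the antisymmetry convention). *)

(* Defs.v *)
From HB Require Import structures.
From mathcomp Require Import all_boot all_order all_algebra.
Set Implicit Arguments. Unset Strict Implicit. Unset Printing Implicit Defensive.
Import Order.TTheory GRing.Theory Num.Theory.
Local Open Scope ring_scope.

(* Graph: vertices 'I_n, edges 'I_m, edge e oriented (a e, b e). *)

(* A step of a walk: an edge together with the direction of traversal
   (true = from a e to b e, false = from b e to a e). *)
Definition step (m : nat) := ('I_m * bool)%type.

Section Graph.
Variables (n m : nat) (a b : 'I_m -> 'I_n).

Definition src (s : step m) : 'I_n := if s.2 then a s.1 else b s.1.
Definition dst (s : step m) : 'I_n := if s.2 then b s.1 else a s.1.

Fixpoint walk (x y : 'I_n) (p : seq (step m)) : bool :=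
  match p with
  | [::] => x == y
  | st :: p' => (src st == x) && walk (dst st) y p'
  end.

Definition walk_verts (x : 'I_n) (p : seq (step m)) := x :: map dst p.

Definition tree_path (T : {set 'I_m}) (x y : 'I_n) (p : seq (step m)) : Prop :=
  [/\ walk x y p, uniq (walk_verts x p) & all (fun st => st.1 \in T) p].

Definition spanning_tree (T : {set 'I_m}) : Prop :=
  forall x y : 'I_n, exists! p, tree_path T x y p.

Variable R : rcfType.
Variable r : 'I_m -> R.

Definition sgn (d : bool) : R := if d then 1 else -1.

Definition incidence : 'M[R]_(m, n) :=
  \matrix_(e, c) ((c == a e)%:R - (c == b e)%:R).

Definition Rmat : 'M[R]_m := \matrix_(i, j) ((i == j)%:R * r i).
Definition Rinv : 'M[R]_m := \matrix_(i, j) ((i == j)%:R * (r i)^-1).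

Definition laplacian : 'M[R]_n := incidence^T *m Rinv *m incidence.

Definition is_MP_pinv (A P : 'M[R]_n) : Prop :=
  [/\ A *m P *m A = A, P *m A *m P = P,
      (A *m P)^T = A *m P & (P *m A)^T = P *m A].

Definition Lnorm (x : 'cV[R]_n) : R := Num.sqrt ((x^T *m laplacian *m x) 0 0).

Definition energy (f : 'cV[R]_m) : R := (f^T *m Rmat *m f) 0 0.

Definition feasible (chi : 'cV[R]_n) (f : 'cV[R]_m) : Prop :=
  incidence^T *m f = chi.

Definition pathflow (p : seq (step m)) : 'cV[R]_m :=
  \sum_(st <- p) sgn st.2 *: delta_mx st.1 (0 : 'I_1).

(* tp x y is (the) tree path from x to y *)
Definition cycle_vec (tp : 'I_n -> 'I_n -> seq (step m)) (e : 'I_m) : 'cV[R]_m :=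
  delta_mx e 0 - pathflow (tp (a e) (b e)).

Definition Rcyc (tp : 'I_n -> 'I_n -> seq (step m)) (e : 'I_m) : R :=
  ((cycle_vec tp e)^T *m Rmat *m cycle_vec tp e) 0 0.

Definition tree_cond (T : {set 'I_m}) (tp : 'I_n -> 'I_n -> seq (step m)) : R :=
  \sum_(e | e \notin T) Rcyc tp e / r e.

Definition tree_volt (tp : 'I_n -> 'I_n -> seq (step m)) (s : 'I_n)
    (f : 'cV[R]_m) : 'cV[R]_n :=
  \col_x \sum_(st <- tp x s) r st.1 * (sgn st.2 * f st.1 0).

End Graph.

(* Main.v *)
Require Import Defs.
From HB Require Import structures.
From mathcomp Require Import all_boot all_order all_algebra.
From mathcomp Require Import ring lra.
Import Order.TTheory GRing.Theory Num.Theory.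
Local Open Scope ring_scope.
Set Implicit Arguments. Unset Strict Implicit. Unset Printing Implicit Defensive.



Section LA.
Variables (R : rcfType) (n m : nat) (a b : 'I_m -> 'I_n) (r : 'I_m -> R).

Lemma sum_dl k (j : 'I_k) (F : 'I_k -> R) : \sum_c (c == j)%:R * F c = F j.
Proof.
rewrite (bigD1 j) //= eqxx mul1r big1 ?addr0 // => c /negbTE ->; by rewrite mul0r.
Qed.

Lemma inc_mul (x : 'cV[R]_n) e : (incidence a b R *m x) e 0 = x (a e) 0 - x (b e) 0.
Proof.
rewrite mxE.
under eq_bigr => c _ do rewrite mxE mulrBl.
by rewrite sumrB !sum_dl.
Qed.

Definition Dv (x : 'cV[R]_n) e := x (a e) 0 - x (b e) 0.

Lemma diag_form (d : 'I_m -> R) (x y : 'cV[R]_m) :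
  (x^T *m (\matrix_(i, j) ((i == j)%:R * d i)) *m y) 0 0 = \sum_e x e 0 * d e * y e 0.
Proof.
rewrite mxE; apply: eq_bigr => j _; rewrite mxE.
under eq_bigr => i _ do rewrite !mxE.
transitivity ((\sum_i (i == j)%:R * (x i 0 * d i)) * y j 0).
  by congr (_ * _); apply: eq_bigr => i _; ring.
by rewrite sum_dl.
Qed.

Lemma energyE (g : 'cV[R]_m) : energy r g = \sum_e g e 0 * r e * g e 0.
Proof. exact: diag_form. Qed.

Lemma RinvT : (Rinv r)^T = Rinv r.
Proof.
apply/matrixP => i j; rewrite !mxE eq_sym.
by case: eqP => [->|]; rewrite ?mul0r.
Qed.

Lemma lapT : (laplacian a b r)^T = laplacian a b r.
Proof. by rewrite /laplacian !trmx_mul trmxK RinvT mulmxA. Qed.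

Lemma Lform (x y : 'cV[R]_n) :
  (x^T *m laplacian a b r *m y) 0 0 = \sum_e Dv x e * (r e)^-1 * Dv y e.
Proof.
have -> : x^T *m laplacian a b r *m y =
   (incidence a b R *m x)^T *m Rinv r *m (incidence a b R *m y).
  by rewrite /laplacian trmx_mul !mulmxA.
rewrite diag_form; apply: eq_bigr => e _; by rewrite !inc_mul.
Qed.

Lemma divform (w : 'cV[R]_n) (g : 'cV[R]_m) :
  (w^T *m ((incidence a b R)^T *m g)) 0 0 = \sum_e Dv w e * g e 0.
Proof.
rewrite mulmxA -trmx_mul mxE; apply: eq_bigr => e _; by rewrite mxE inc_mul.
Qed.

Lemma Rinv_mul (y : 'cV[R]_m) e : (Rinv r *m y) e 0 = (r e)^-1 * y e 0.
Proof.
rewrite mxE.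
under eq_bigr => c _ do rewrite mxE eq_sym.
transitivity (\sum_c (c == e)%:R * ((r e)^-1 * y c 0)).
  apply: eq_bigr => c _; case: eqP => [->|]; by rewrite ?mul0r ?mul1r.
by rewrite sum_dl.
Qed.

End LA.


Section P2.
Variables (R : rcfType) (n m : nat) (a b : 'I_m -> 'I_n) (r : 'I_m -> R).
Hypothesis rpos : forall e, 0 < r e.

Lemma Dv0 (z : 'cV[R]_n) : (z^T *m laplacian a b r *m z) 0 0 = 0 -> forall e, Dv a b z e = 0.
Proof.
rewrite Lform => H e.
have H2 := psumr_eq0P (P := predT) _ H.
have : Dv a b z e * (r e)^-1 * Dv a b z e = 0.
  apply: H2 => // i _.
  rewrite mulrC mulrA; apply: mulr_ge0; last by rewrite invr_ge0 ltW.
  by rewrite -expr2 sqr_ge0.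
move/eqP; rewrite mulrC mulrA mulf_eq0 invr_eq0 (gt_eqF (rpos e)) orbF -expr2 sqrf_eq0.
by move/eqP.
Qed.

Lemma LLdag (Ldag : 'M[R]_n) chi (fs : 'cV[R]_m) :
  is_MP_pinv (laplacian a b r) Ldag -> feasible a b chi fs ->
  laplacian a b r *m (Ldag *m chi) = chi.
Proof.
case=> H1 H2 H3 H4 Hf.
set L := laplacian a b r in H1 H2 H3 H4 *.
set P := L *m Ldag.
have PL : P *m L = L by [].
have LP : L *m P = L.
  have T1 : (L *m P)^T = L by rewrite trmx_mul H3 -/P /L lapT.
  by rewrite -[L *m P]trmxK T1 /L lapT.
have PP : P *m P = P by rewrite /P mulmxA H1.
set z := chi - P *m chi.
have Lz : L *m z = 0 by rewrite mulmxBr mulmxA LP subrr.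
have Pz : P *m z = 0 by rewrite mulmxBr mulmxA PP subrr.
have zLz : (z^T *m L *m z) 0 0 = 0 by rewrite -mulmxA Lz mulmx0 mxE.
have HD := Dv0 zLz.
have zchi : (z^T *m chi) 0 0 = 0.
  rewrite -Hf divform big1 // => e _; by rewrite HD mul0r.
have zz : (z^T *m z) 0 0 = 0.
  rewrite {2}/z mulmxBr mulmxA -[z^T *m P]trmxK trmx_mul trmxK H3 -/P Pz.
  rewrite trmx0 mul0mx subr0. done.
have zi : forall i, z i 0 = 0.
  move=> i; move: zz; rewrite mxE => zz.
  have H5 := psumr_eq0P (P := predT) _ zz.
  have : z^T 0 i * z i 0 = 0.
    apply: H5 => // j _; by rewrite mxE -expr2 sqr_ge0.
  by rewrite mxE -expr2 => /eqP; rewrite sqrf_eq0 => /eqP.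
have z0 : z = 0 by apply/matrixP => i j; rewrite (ord1 j) zi mxE.
by rewrite mulmxA -/P; apply/eqP; rewrite eq_sym -subr_eq0 -/z z0.
Qed.

End P2.


Section P3.
Variables (R : rcfType) (n m : nat) (a b : 'I_m -> 'I_n) (r : 'I_m -> R).
Hypothesis rpos : forall e, 0 < r e.

Lemma opt_orth chi (fs g : 'cV[R]_m) : feasible a b chi fs ->
  (forall h, feasible a b chi h -> energy r fs <= energy r h) ->
  (incidence a b R)^T *m g = 0 -> \sum_e fs e 0 * r e * g e 0 = 0.
Proof.
move=> Hf Hopt Hg.
set S := \sum_e fs e 0 * r e * g e 0.
set Q := \sum_e g e 0 * r e * g e 0.
have Q0 : 0 <= Q.
  apply: sumr_ge0 => e _; rewrite mulrC mulrA; apply: mulr_ge0; last exact: ltW.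
  by rewrite -expr2 sqr_ge0.
have expand t : energy r (fs + t *: g) = energy r fs + 2 * t * S + t ^+ 2 * Q.
  rewrite !energyE.
  under eq_bigr do rewrite !mxE.
  transitivity (\sum_e (fs e 0 * r e * fs e 0 + (2 * t) * (fs e 0 * r e * g e 0)
                 + t ^+ 2 * (g e 0 * r e * g e 0))).
    by apply: eq_bigr => e _; ring.
  by rewrite !big_split /= -!mulr_sumr.
have feas t : feasible a b chi (fs + t *: g).
  by rewrite /feasible mulmxDr -scalemxAr Hg scaler0 addr0.
set t := - S / (Q + 1).
have := Hopt _ (feas t); rewrite expand => H.
have H0 : 0 <= 2 * t * S + t ^+ 2 * Q by lra.
have ht : t * (Q + 1) = - S by rewrite /t mulrAC -mulrA divff ?mulr1 // gt_eqF // ltr_wpDl.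
have E2 : (2 * t * S + t ^+ 2 * Q) * (Q + 1) ^+ 2 = - (S ^+ 2 * (Q + 2)).
  transitivity (2 * S * (Q + 1) * (t * (Q + 1)) + Q * (t * (Q + 1)) ^+ 2); first ring.
  rewrite ht; ring.
have HS : S ^+ 2 * (Q + 2) <= 0.
  rewrite -oppr_ge0 -E2; apply: mulr_ge0 => //; exact: sqr_ge0.
 have HS0 : S ^+ 2 * (Q + 2) = 0.
  apply/eqP; rewrite eq_le HS /=; apply: mulr_ge0; [exact: sqr_ge0 | lra].
move/eqP: HS0; rewrite mulf_eq0 sqrf_eq0 => /orP [/eqP //|].
move=> /eqP Q2; have : (0:R) < Q + 2 by apply: ltr_wpDl.
by rewrite Q2 ltxx.
Qed.

End P3.


Section P4.
Variables (R : rcfType) (n m : nat) (a b : 'I_m -> 'I_n).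

Definition Lin (wt : 'I_m -> R) (x : 'cV[R]_m) := \sum_i wt i * x i 0.

Lemma Lin_delta wt j : Lin wt (delta_mx j 0) = wt j.
Proof.
rewrite /Lin (bigD1 j) //= mxE !eqxx mulr1 big1 ?addr0 // => i /negbTE Hi.
by rewrite mxE Hi mulr0.
Qed.

Lemma Lin_sub wt x y : Lin wt (x - y) = Lin wt x - Lin wt y.
Proof.
rewrite /Lin -sumrB; apply: eq_bigr => i _; by rewrite !mxE mulrBr.
Qed.

Lemma Lin_pathflow wt p : Lin wt (pathflow R p) = \sum_(st <- p) sgn R st.2 * wt st.1.
Proof.
rewrite /Lin /pathflow.
under eq_bigr do rewrite summxE mulr_sumr.
rewrite exchange_big; apply: eq_bigr => st _.
rewrite -(Lin_delta wt st.1) /Lin mulr_sumr; apply: eq_bigr => i _.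
rewrite !mxE; ring.
Qed.

Lemma walk_div c x y p : walk a b x y p ->
  \sum_(st <- p) sgn R st.2 * ((c == a st.1)%:R - (c == b st.1)%:R)
  = (c == x)%:R - (c == y)%:R.
Proof.
elim: p x => [|st p IH] x /=.
  by move/eqP => ->; rewrite big_nil subrr.
case/andP => /eqP Hs Hw; rewrite big_cons (IH _ Hw) -Hs.
case: st {Hs Hw} => e [] /=; rewrite /src /dst /sgn /=; ring.
Qed.

Lemma cyc_circ T tp e : tree_path a b T (a e) (b e) (tp (a e) (b e)) ->
  (incidence a b R)^T *m cycle_vec a b R tp e = 0.
Proof.
case=> Hw _ _; apply/matrixP => c j; rewrite (ord1 j) !mxE.
have -> : \sum_j0 (incidence a b R)^T c j0 * cycle_vec a b R tp e j0 0 =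
   Lin (fun e' => (c == a e')%:R - (c == b e')%:R) (cycle_vec a b R tp e).
  by apply: eq_bigr => i _; rewrite !mxE.
by rewrite /cycle_vec Lin_sub Lin_delta Lin_pathflow (walk_div c Hw) subrr.
Qed.

Lemma suffix x y p x' : walk a b x y p -> x' \in walk_verts a b x p ->
  exists k, walk a b x' y (drop k p) /\
            walk_verts a b x' (drop k p) = drop k (walk_verts a b x p).
Proof.
rewrite /walk_verts.
elim: p x => [|st p IH] x /=.
  by rewrite inE => Hw /eqP ->; exists 0%N.
case/andP => /eqP Hs Hw; rewrite inE => /orP [/eqP ->|Hin].
  by exists 0%N; rewrite /= Hs eqxx Hw.
have [k [H1 H2]] := IH _ Hw Hin.
by exists k.+1.
Qed.

Variable (T : {set 'I_m}).
Hypothesis HT : spanning_tree a b T.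

Lemma tree_uniq x y p q : tree_path a b T x y p -> tree_path a b T x y q -> p = q.
Proof.
move=> Hp Hq; have [p0 [_ Hu]] := HT x y.
by rewrite -(Hu _ Hp) -(Hu _ Hq).
Qed.

Variables (r : 'I_m -> R) (tp : 'I_n -> 'I_n -> seq (step m)) (s : 'I_n) (f : 'cV[R]_m).
Hypothesis Htp : forall x y, tree_path a b T x y (tp x y).
Hypothesis Hab : forall e, a e != b e.

Definition V x := \sum_(st <- tp x s) r st.1 * (sgn R st.2 * f st.1 0).

Lemma all_drop' (P : pred (step m)) k p : all P p -> all P (drop k p).
Proof. by move/allP => H; apply/allP => z /mem_drop /H. Qed.

Lemma TE e : e \in T -> V (a e) - V (b e) = r e * f e 0.
Proof.
move=> eT; rewrite /V.
set p := tp (b e) s; set q := tp (a e) s.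
have [Hpw Hpu Hpa] := Htp (b e) s.
have [Hqw Hqu Hqa] := Htp (a e) s.
case Ha: (a e \in walk_verts a b (b e) p).
  case Hb: (b e \in walk_verts a b (a e) q).
    exfalso.
    have [k [Hk1 Hk2]] := suffix Hpw Ha.
    have Hq : drop k p = q.
      apply: (tree_uniq _ (Htp (a e) s)); rewrite /tree_path; split => //; first by rewrite Hk2 drop_uniq.
      exact: all_drop'.
    move: Hb; rewrite -Hq Hk2.
    case: k {Hk1 Hq} Hk2 => [|k] Hk2.
      move: Hk2; rewrite drop0 /walk_verts => -[] Hae.
      by move: (Hab e); rewrite Hae eqxx.
    move: Hpu; rewrite /walk_verts /= => /andP [Hn _] /mem_drop Hm.
    by rewrite Hm in Hn.
  have Hp : p = (e, false) :: q.
    apply: tree_uniq (Htp (b e) s) _; split => /=.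
    - by rewrite /src /= eqxx.
    - move: Hqu; rewrite /walk_verts /= => ->; move: Hb; rewrite /walk_verts => -> //.
    - by rewrite eT.
  by rewrite Hp big_cons /sgn /=; ring.
have Hq : q = (e, true) :: p.
  apply: tree_uniq (Htp (a e) s) _; split => /=.
  - by rewrite /src /= eqxx.
  - move: Hpu; rewrite /walk_verts /= => ->; move: Ha; rewrite /walk_verts => -> //.
  - by rewrite eT.
by rewrite Hq big_cons /sgn /=; ring.
Qed.

Lemma TS x y p : walk a b x y p -> all (fun st => st.1 \in T) p ->
  \sum_(st <- p) r st.1 * (sgn R st.2 * f st.1 0) = V x - V y.
Proof.
elim: p x => [|st p IH] x /=.
  by move/eqP => ->; rewrite big_nil subrr.
case/andP => /eqP Hs Hw /andP [Hst Ha].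
rewrite big_cons (IH _ Hw Ha) -Hs.
case: st Hst {Hs Hw} => e [] /= eT; rewrite /src /dst /sgn /=.
  rewrite mul1r -(TE eT); ring.
have := TE eT => H.
transitivity (- (V (a e) - V (b e)) + (V (a e) - V y)); last ring.
by rewrite H; ring.
Qed.

End P4.


Lemma CS (R : rcfType) m (r u w : 'I_m -> R) : (forall e, 0 < r e) ->
  (\sum_e r e * u e * w e) ^+ 2 <= (\sum_e r e * u e * u e) * (\sum_e r e * w e * w e).
Proof.
move=> rpos.
set A := \sum_e r e * u e * w e; set U := \sum_e r e * u e * u e;
set W := \sum_e r e * w e * w e.
have sq0 e (x : R) : 0 <= r e * x * x.
  rewrite -mulrA; apply: mulr_ge0; [exact: ltW | rewrite -expr2; exact: sqr_ge0].
have W0 : 0 <= W by apply: sumr_ge0 => e _; apply: sq0.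
case: (eqVneq W 0) => HW.
  have wz e : w e = 0.
    have H2 := psumr_eq0P (P := predT) _ HW.
    have : r e * w e * w e = 0 by apply: H2 => // i _; apply: sq0.
    move/eqP; rewrite -mulrA mulf_eq0 (gt_eqF (rpos e)) /= -expr2 sqrf_eq0.
    by move/eqP.
  have -> : A = 0 by rewrite /A big1 // => e _; rewrite wz mulr0.
  by rewrite HW expr0n mulr0.
have Wp : 0 < W by rewrite lt_def HW W0.
have H : 0 <= W * (U * W - A ^+ 2).
  have -> : W * (U * W - A ^+ 2) = \sum_e r e * (W * u e - A * w e) * (W * u e - A * w e).
    transitivity (\sum_e (W ^+ 2 * (r e * u e * u e) + (- 2 * W * A) * (r e * u e * w e)
                 + A ^+ 2 * (r e * w e * w e))).
      by rewrite !big_split /= -!mulr_sumr -/A -/U -/W; ring.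
    by apply: eq_bigr => e _; ring.
  by apply: sumr_ge0 => e _; apply: sq0.
by move: H; rewrite pmulr_rge0 // subr_ge0.
Qed.


Unset Implicit Arguments.
Theorem lemma6p2 (R : rcfType) (n m : nat) (a b : 'I_m -> 'I_n)
    (r : 'I_m -> R) (T : {set 'I_m}) (tp : 'I_n -> 'I_n -> seq (step m))
    (s : 'I_n) (chi : 'cV[R]_n) (Ldag : 'M[R]_n) (fstar f : 'cV[R]_m) (eps : R) :
  (forall e, a e != b e) ->
  (forall e, 0 < r e) ->
  spanning_tree a b T ->
  (forall x y, tree_path a b T x y (tp x y)) ->
  \sum_(c < n) chi c 0 = 0 ->
  is_MP_pinv (laplacian a b r) Ldag ->
  feasible a b chi fstar ->
  (forall g, feasible a b chi g -> energy r fstar <= energy r g) ->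
  [exists e, e \notin T] ->
  0 < eps ->
  feasible a b chi f ->
  energy r f <= (1 + eps) * energy r fstar ->
  Lnorm a b r (tree_volt r tp s f - Ldag *m chi)
    <= Num.sqrt (eps * tree_cond a b r T tp) * Lnorm a b r (Ldag *m chi).
Proof.
move=> Hab rpos HT Htp _ HMP Hfs Hopt _ Heps Hf Hen.
set phi := Ldag *m chi.
set v := tree_volt r tp s f.
have Lphi : laplacian a b r *m phi = chi := LLdag rpos HMP Hfs.
have rn0 e : r e != 0 by rewrite gt_eqF.
set d := Dv a b v. set p := Dv a b phi.
have vE x : v x 0 = V r tp s f x by rewrite mxE.
have QvpE : ((v - phi)^T *m laplacian a b r *m (v - phi)) 0 0
            = \sum_e (d e - p e) * (r e)^-1 * (d e - p e).
  rewrite Lform; apply: eq_bigr => e _; by rewrite /Dv /d /p /Dv !mxE; ring.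
have QphiE : (phi^T *m laplacian a b r *m phi) 0 0 = \sum_e p e * (r e)^-1 * p e.
  by rewrite Lform.
set Qphi := \sum_e p e * (r e)^-1 * p e.
have Qphi0 : 0 <= Qphi.
  apply: sumr_ge0 => e _; rewrite mulrAC -expr2 mulr_ge0 ?sqr_ge0 //.
  by rewrite invr_ge0 ltW.
have HA : \sum_e d e * (r e)^-1 * p e = \sum_e d e * fstar e 0.
  rewrite -Lform -mulmxA Lphi -Hfs divform //.
have HB : Qphi = \sum_e p e * fstar e 0.
  by rewrite /Qphi -Lform -mulmxA Lphi -Hfs divform.
have HA' : \sum_e d e * f e 0 = \sum_e d e * fstar e 0.
  by rewrite -!divform Hf Hfs.
set k := fun e => r e * f e 0 - d e.
have kT e : e \in T -> k e = 0.
  move=> eT; rewrite /k /d /Dv !vE (TE HT r s f Htp Hab eT); ring.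
set X := \sum_e r e * (f e 0 - fstar e 0) * (f e 0 - fstar e 0).
have kE e : k e = \sum_i r i * (f i 0 - fstar i 0) * cycle_vec a b R tp e i 0.
  have [Hw _ Ha] := Htp (a e) (b e).
  have D0 := opt_orth rpos Hfs Hopt (cyc_circ R (Htp (a e) (b e))).
  have -> : \sum_i r i * (f i 0 - fstar i 0) * cycle_vec a b R tp e i 0 =
     Lin (fun i => r i * f i 0) (cycle_vec a b R tp e).
    transitivity (\sum_i r i * f i 0 * cycle_vec a b R tp e i 0
       - \sum_i fstar i 0 * r i * cycle_vec a b R tp e i 0).
      by rewrite -sumrB; apply: eq_bigr => i _; ring.
    by rewrite D0 subr0.
  rewrite /cycle_vec Lin_sub Lin_delta Lin_pathflow /k /d /Dv !vE.
  rewrite -(TS HT r s f Htp Hab Hw Ha); congr (_ - _).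
  by apply: eq_bigr => st _; ring.
have HE e : k e ^+ 2 <= Rcyc a b r tp e * X.
  rewrite kE /Rcyc diag_form mulrC /X.
  have := CS (fun i => f i 0 - fstar i 0) (fun i => cycle_vec a b R tp e i 0) rpos.
  congr (_ <= _ * _); apply: eq_bigr => i _; ring.
have HF : X = energy r f - energy r fstar.
  have D0 : \sum_e fstar e 0 * r e * (f - fstar) e 0 = 0.
    apply: (opt_orth rpos Hfs Hopt).
    by rewrite mulmxBr Hf Hfs subrr.
  transitivity (\sum_e f e 0 * r e * f e 0 - \sum_e fstar e 0 * r e * fstar e 0
     - 2 * \sum_e fstar e 0 * r e * (f - fstar) e 0).
    rewrite mulr_sumr -!sumrB; apply: eq_bigr => e _; rewrite !mxE; ring.
  by rewrite D0 mulr0 subr0 !energyE.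
have HG : energy r fstar <= Qphi.
  set g := Rinv r *m (incidence a b R *m phi).
  have Hg : feasible a b chi g by move: Lphi; rewrite /feasible /g /laplacian !mulmxA.
  apply: (le_trans (Hopt _ Hg)); rewrite energyE /Qphi le_eqVlt; apply/orP; left; apply/eqP.
  apply: eq_bigr => e _; rewrite /g Rinv_mul inc_mul -/(Dv a b phi e) -/p.
  by field.
have HX : energy r fstar <= energy r f := Hopt _ Hf.
set gap := \sum_e k e * (r e)^-1 * k e.
have Qvp_gap : \sum_e (d e - p e) * (r e)^-1 * (d e - p e) <= gap.
  have -> : \sum_e (d e - p e) * (r e)^-1 * (d e - p e) =
     gap + (-1) * energy r f + 2 * \sum_e d e * f e 0 + (-2) * \sum_e d e * (r e)^-1 * p e + Qphi.
    rewrite energyE /gap /Qphi !mulr_sumr -!big_split /=.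
    apply: eq_bigr => e _; rewrite /k; by field.
  rewrite HA HA'.
  have WD : 0 <= energy r fstar - Qphi.
    have -> : energy r fstar - Qphi =
      \sum_e (r e * fstar e 0 - p e) * (r e)^-1 * (r e * fstar e 0 - p e).
      have -> : energy r fstar - Qphi = energy r fstar + (-2) * (\sum_e p e * fstar e 0) + Qphi.
        by rewrite -HB; ring.
      rewrite energyE /Qphi !mulr_sumr -!big_split /=.
      by apply: eq_bigr => e _; field.
    apply: sumr_ge0 => e _; rewrite mulrAC -expr2 mulr_ge0 ?sqr_ge0 //.
    by rewrite invr_ge0 ltW.
  lra.
have gapT : gap = \sum_(e | e \notin T) k e * (r e)^-1 * k e.
  rewrite /gap (bigID (fun e => e \in T)) /= big1 ?add0r // => e eT.
  by rewrite (kT e eT) !mul0r.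
have tau0 : 0 <= tree_cond a b r T tp.
  apply: sumr_ge0 => e _; apply: mulr_ge0; last by rewrite invr_ge0 ltW.
  rewrite /Rcyc diag_form; apply: sumr_ge0 => i _.
  rewrite mulrAC -expr2; apply: mulr_ge0; [exact: sqr_ge0 | exact: ltW].
have gapX : gap <= X * tree_cond a b r T tp.
  rewrite gapT /tree_cond mulr_sumr; apply: ler_sum => e _.
  have -> : X * (Rcyc a b r tp e / r e) = Rcyc a b r tp e * X * (r e)^-1 by ring.
  rewrite mulrAC -expr2; apply: ler_wpM2r; [by rewrite invr_ge0 ltW | exact: HE].
have XQ : X <= eps * Qphi.
  apply: (le_trans (_ : X <= eps * energy r fstar)); first by rewrite HF; lra.
  by apply: ler_wpM2l; [exact: ltW | exact: HG].
have fin : \sum_e (d e - p e) * (r e)^-1 * (d e - p e) <= eps * tree_cond a b r T tp * Qphi.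
  apply: (le_trans Qvp_gap); apply: (le_trans gapX).
  apply: (le_trans (ler_wpM2r tau0 XQ)); by rewrite mulrAC.
rewrite /Lnorm QvpE QphiE -/Qphi -sqrtrM; last by apply: mulr_ge0 => //; exact: ltW.
rewrite ler_sqrt //; apply: mulr_ge0 => //; apply: mulr_ge0 => //; exact: ltW.
Qed.
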